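(* Let $n\ge1$, $m\ge2$, and let $\sigma_0,\dots,\sigma_m$ be the Coxeter generators of the affine Weyl group $\tilde C_m$. (1) Setting $\sigma_i(v)=s_i(v)$ for each vertex $v$ of $Y_{n,m}$ and $0\le i\le m$, and extending multiplicatively, gives a well-defined action of $\tilde C_m$ on the vertex set of $Y_{n,m}$. (2) $Y_{n,m}$ is the Schreier graph of $\tilde C_m$ with respect to the generating set $\{\sigma_0,\dots,\sigma_m\}$ and this action.
   Context: The Yoke graph $Y_{n,m}$ has vertices the tuples $v=(v_0,\dots,v_{m+1})$ with $v_0,v_{m+1}\in\mathbb{Z}_n$, $v_1,\dots,v_m\in\{0,1\}$, $\sum v_i\equiv0\pmod n$; $u\sim v$ iff there is $0\le i\le m$ with $u_j=v_j$ for $j\notin\{i,i+1\}$ and either ($u_i=v_i+1$, $u_{i+1}=v_{i+1}-1$) or ($u_i=v_i-1$, $u_{i+1}=v_{i+1}+1$), bucket entries mod $n$. For $0\le i\le m$, $\overleftarrow{s}_i(v)$ replaces $v_i,v_{i+1}$ by $v_i+1,v_{i+1}-1$, and $\overrightarrow{s}_i(v)$ by $v_i-1,v_{i+1}+1$. Define $s_0(v)=\overleftarrow{s}_0(v)$ if $v_1=1$, $\overrightarrow{s}_0(v)$ if $v_1=0$; $s_m(v)=\overleftarrow{s}_m(v)$ if $v_m=0$, $\overrightarrow{s}_m(v)$ if $v_m=1$; for $1\le i\le m-1$, $s_i$ swaps $v_i$ and $v_{i+1}$. $\tilde C_m$ is the group generated by $\sigma_0,\dots,\sigma_m$ with relations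 $\sigma_i^2=1$, $(\sigma_i\sigma_j)^2=1$ for $|i-j|>1$, $(\sigma_i\sigma_{i+1})^3=1$ for $1\le i\le m-2$, $(\sigma_0\sigma_1)^4=(\sigma_{m-1}\sigma_m)^4=1$. The Schreier graph of a group acting on a set $V$ with respect to a symmetric generating set $S$ is the (simple) graph on $V$ in which $x$ and $y\ne x$ are adjacent iff $y=s(x)$ for some $s\in S$. *)

(* Defs.v *)
From mathcomp Require Import all_boot all_order all_algebra.
Set Implicit Arguments. Unset Strict Implicit. Unset Printing Implicit Defensive.
Import Order.TTheory GRing.Theory Num.Theory.
Local Open Scope ring_scope.

(* A vertex of Y_{n,m} is represented by the list [v_0; v_1; ...; v_{m+1}]
   of integers, the bucket entries v_0, v_{m+1} being canonical
   representatives in [0, n) of Z_n. *)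

Definition ent (v : seq int) (k : nat) : int := nth 0 v k.

Definition is_bucket (m k : nat) : bool := (k == 0)%N || (k == m.+1)%N.

Definition yoke_vertex (n m : nat) (v : seq int) : bool :=
  [&& size v == m.+2,
      [forall j : 'I_(m.+2),
         if is_bucket m j then (0 <= ent v j) && (ent v j < n%:Z)
         else (ent v j == 0) || (ent v j == 1)]
    & (n%:Z %| \sum_(j < m.+2) ent v j)%Z].

Definition eq_ent (n m k : nat) (a b : int) : bool :=
  if is_bucket m k then (n%:Z %| (a - b))%Z else a == b.

Definition yoke_adj (n m : nat) (u v : seq int) : Prop :=
  exists i : nat, (i <= m)%N /\
    (forall j : nat, (j < m.+2)%N -> j <> i -> j <> i.+1 -> eq_ent n m j (ent u j) (ent v j)) /\
    ((eq_ent n m i (ent u i) (ent v i + 1) /\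
      eq_ent n m i.+1 (ent u i.+1) (ent v i.+1 - 1)) \/
     (eq_ent n m i (ent u i) (ent v i - 1) /\
      eq_ent n m i.+1 (ent u i.+1) (ent v i.+1 + 1))).

Definition norm_ent (n m k : nat) (x : int) : int :=
  if is_bucket m k then (x %% n%:Z)%Z else x.

Definition upd2 (n m i : nat) (v : seq int) (a b : int) : seq int :=
  mkseq (fun j => if j == i then norm_ent n m j a
                  else if j == i.+1 then norm_ent n m j b
                  else ent v j) m.+2.

Definition sL (n m i : nat) (v : seq int) : seq int :=
  upd2 n m i v (ent v i + 1) (ent v i.+1 - 1).
Definition sR (n m i : nat) (v : seq int) : seq int :=
  upd2 n m i v (ent v i - 1) (ent v i.+1 + 1).

Definition s_gen (n m : nat) (i : 'I_m.+1) (v : seq int) : seq int :=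
  if (i == 0 :> nat) then (if ent v 1 == 1 then sL n m 0 v else sR n m 0 v)
  else if (i == m :> nat) then (if ent v m == 0 then sL n m m v else sR n m m v)
  else upd2 n m i v (ent v i.+1) (ent v i).
Arguments s_gen : clear implicits.

(* words in the generators sigma_0..sigma_m; the word [:: i1; ...; ik]
   stands for sigma_{i1} ... sigma_{ik}, acting by s_{i1} o ... o s_{ik} *)
Definition act (n m : nat) (w : seq 'I_m.+1) (v : seq int) : seq int :=
  foldr (s_gen n m) v w.
Arguments act : clear implicits.

Inductive cox_rel (m : nat) : seq 'I_m.+1 -> seq 'I_m.+1 -> Prop :=
| cr_sq i : cox_rel [:: i; i] [::]
| cr_far (i j : 'I_m.+1) : (i.+1 < j)%N \/ (j.+1 < i)%N ->
    cox_rel [:: i; j; i; j] [::]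
| cr_braid (i j : 'I_m.+1) : (1 <= i)%N -> (i <= m - 2)%N -> (j : nat) = i.+1 ->
    cox_rel [:: i; j; i; j; i; j] [::]
| cr_left (i j : 'I_m.+1) : (i : nat) = 0%N -> (j : nat) = 1%N ->
    cox_rel [:: i; j; i; j; i; j; i; j] [::]
| cr_right (i j : 'I_m.+1) : (i : nat) = m.-1 -> (j : nat) = m ->
    cox_rel [:: i; j; i; j; i; j; i; j] [::].

(* the congruence on words generated by the relators: two words are equal
   in C~_m iff they are related by cox_eq (all generators are involutions,
   so the monoid presentation gives the group) *)
Inductive cox_eq (m : nat) : seq 'I_m.+1 -> seq 'I_m.+1 -> Prop :=
| ce_refl w : cox_eq w w
| ce_sym w1 w2 : cox_eq w1 w2 -> cox_eq w2 w1
| ce_trans w1 w2 w3 : cox_eq w1 w2 -> cox_eq w2 w3 -> cox_eq w1 w3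
| ce_ctx p q a b : cox_rel a b -> cox_eq (p ++ a ++ q) (p ++ b ++ q).

(* Main.v *)
Require Import Defs.
From mathcomp Require Import all_boot all_order all_algebra zify.
Import GRing.Theory Num.Theory.
Local Open Scope ring_scope.
Set Implicit Arguments. Unset Strict Implicit. Unset Printing Implicit Defensive.
Arguments ent : simpl never.

Lemma modz_canon (n : nat) (a x : int) : (0 < n)%N -> 0 <= a < n%:Z -> (n%:Z %| a - x)%Z -> a = (x %% n%:Z)%Z.
Proof. move=> hn ha; rewrite -eqz_mod_dvd => /eqP <-; by rewrite modz_small. Qed.

Lemma dvd_modsub (n : nat) (x : int) : (n%:Z %| (x %% n%:Z)%Z - x)%Z.
Proof. by rewrite -eqz_mod_dvd modz_mod. Qed.

Lemma modz_bnd (n : nat) (x : int) : (0 < n)%N -> 0 <= (x %% n%:Z)%Z < n%:Z.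
Proof. move=> hn; rewrite modz_ge0 ?ltz_pmod //; lia. Qed.

Definition pf (n m k : nat) (x y : int) : int * int :=
  if k == 0%N then (if y == 1 then (((x+1) %% n%:Z)%Z, y - 1) else (((x-1) %% n%:Z)%Z, y+1))
  else if k == m then (if x == 0 then (x+1, ((y-1) %% n%:Z)%Z) else (x-1, ((y+1) %% n%:Z)%Z))
  else (y, x).
Lemma ent_upd2 n m i v a b p : (p < m.+2)%N ->
  ent (upd2 n m i v a b) p = if p == i then norm_ent n m p a else if p == i.+1 then norm_ent n m p b else ent v p.
Proof. by move=> hp; rewrite /ent /upd2 nth_mkseq. Qed.
Lemma ent_sgen n m (k : 'I_m.+1) w p : (1 <= m)%N -> (p < m.+2)%N ->
  ent (s_gen n m k w) p =
   if p == k then (pf n m k (ent w k) (ent w k.+1)).1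
   else if p == k.+1 then (pf n m k (ent w k) (ent w k.+1)).2 else ent w p.
Proof.
move=> hm hp; case: k => k hk.
rewrite /s_gen /pf [nat_of_ord _]/=.
case: (k =P 0%N) => [->|hk0].
  rewrite /sL /sR; case: ifP => _; rewrite ent_upd2 //;
  (case: (p =P 0%N) => [->|hp0]; [|case: (p =P 1%N) => [->|hp1]]);
  rewrite /norm_ent /is_bucket //; case: ifP => //; lia.
case: (k =P m) => [->|hkm].
  rewrite /sL /sR; case: ifP => _; rewrite ent_upd2 //;
  (case: (p =P m) => [->|hp0]; [|case: (p =P m.+1) => [->|hp1]]);
  rewrite /norm_ent /is_bucket // ?eqxx ?orbT //; case: ifP => //; lia.
rewrite ent_upd2 //; (case: (p =P k) => [->|hp0]; [|case: (p =P k.+1) => [->|hp1]]);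
  rewrite /norm_ent /is_bucket //; case: ifP => //; lia.
Qed.

Lemma size_upd2 n m i v a b : size (upd2 n m i v a b) = m.+2.
Proof. by rewrite size_mkseq. Qed.

Lemma size_sgen n m k v : size (s_gen n m k v) = m.+2.
Proof. rewrite /s_gen /sL /sR; by repeat case: ifP => _; rewrite size_upd2. Qed.

Lemma eq_from_ent m (u v : seq int) : size u = m.+2 -> size v = m.+2 ->
  (forall p, (p < m.+2)%N -> ent u p = ent v p) -> u = v.
Proof. move=> hu hv h; apply: (eq_from_nth (x0:=0)); first by rewrite hu hv.
by move=> p; rewrite hu => /h. Qed.

Lemma nb m p : (0 < p)%N -> (p <= m)%N -> is_bucket m p = false.
Proof. rewrite /is_bucket; lia. Qed.

Lemma vtx_size n m v : yoke_vertex n m v -> size v = m.+2.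
Proof. by case/and3P => /eqP. Qed.

Lemma vtx_ent n m v p : yoke_vertex n m v -> (p < m.+2)%N ->
  if is_bucket m p then (0 <= ent v p) && (ent v p < n%:Z) else (ent v p == 0) || (ent v p == 1).
Proof. case/and3P => _ /forallP h _ hp; exact: (h (Ordinal hp)). Qed.

Lemma vtx_bit n m v p : yoke_vertex n m v -> (0 < p)%N -> (p <= m)%N -> ent v p = 0 \/ ent v p = 1.
Proof. move=> hv h1 h2; have := vtx_ent hv (_ : (p < m.+2)%N); rewrite nb //; lia. Qed.

Lemma vtx_b0 n m v : yoke_vertex n m v -> 0 <= ent v 0 < n%:Z.
Proof. by move=> hv; have := vtx_ent hv (_ : (0 < m.+2)%N); apply. Qed.

Lemma vtx_bm n m v : yoke_vertex n m v -> 0 <= ent v m.+1 < n%:Z.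
Proof. move=> hv; have := vtx_ent hv (_ : (m.+1 < m.+2)%N); rewrite /is_bucket eqxx orbT; apply => //. Qed.

Lemma sum2 N (F G : nat -> int) k : (k.+1 < N)%N ->
  (forall j, (j < N)%N -> j != k -> j != k.+1 -> F j = G j) ->
  \sum_(j < N) F j = \sum_(j < N) G j + (F k - G k) + (F k.+1 - G k.+1).
Proof.
move=> hk1 H; have hk : (k < N)%N by apply: ltnW.
have ne : (Ordinal hk1 != Ordinal hk).
  by rewrite -val_eqE /= gtn_eqF.
rewrite (bigD1 (Ordinal hk)) // [X in _ = X + _ + _](bigD1 (Ordinal hk)) //.
rewrite (bigD1 (Ordinal hk1)) ?ne // [X in _ = _ + X + _ + _](bigD1 (Ordinal hk1)) ?ne //=.
rewrite [X in _ = _ + (_ + X) + _ + _](eq_bigr (fun j : 'I_N => F j)); last first.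
  by move=> i /andP[h1 h2]; rewrite H.
move: (\sum_(i < N | _) F i) => S.
move: (F k) (F k.+1) (G k) (G k.+1) => a b c d.
lia.
Qed.

Lemma pfm n m x y : (0 < m)%N -> pf n m m x y = (if x == 0 then (x+1, ((y-1) %% n%:Z)%Z) else (x-1, ((y+1) %% n%:Z)%Z)).
Proof. by move=> hm; rewrite /pf eqxx (gtn_eqF hm). Qed.

Lemma pfmid n m k x y : k != 0%N -> k != m -> pf n m k x y = (y, x).
Proof. by move=> h1 h2; rewrite /pf (negbTE h1) (negbTE h2). Qed.

Definition valid n m j (z : int) : bool :=
  if is_bucket m j then (0 <= z) && (z < n%:Z) else (z == 0) || (z == 1).

Lemma pf_valid n m k x y : (0 < n)%N -> (1 <= m)%N -> (k <= m)%N ->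
  valid n m k x -> valid n m k.+1 y ->
  valid n m k (pf n m k x y).1 /\ valid n m k.+1 (pf n m k x y).2.
Proof.
move=> hn hm hk; rewrite /valid /pf.
case: (k =P 0%N) => [->|k0].
  rewrite (nb (m:=m) (p:=1)) //= => _ hy.
  by case: ifP => /eqP h /=; rewrite modz_bnd //; lia.
case: (k =P m) => [->|km].
  rewrite nb // /is_bucket eqxx orbT /= => hx _.
  by case: ifP => /eqP h /=; rewrite modz_bnd //; lia.
rewrite !nb //=; lia.
Qed.

Lemma pf_dvd n m k x y : (1 <= m)%N ->
  (n%:Z %| ((pf n m k x y).1 - x) + ((pf n m k x y).2 - y))%Z.
Proof.
move=> hm; rewrite /pf.
case: (k =P 0%N) => [_|k0].
  case: ifP => _ /=.
    have := dvd_modsub n (x + 1); move: (_ %% _)%Z => t.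
    by have -> : t - x + (y - 1 - y) = t - (x + 1) by lia.
  have := dvd_modsub n (x - 1); move: (_ %% _)%Z => t.
  by have -> : t - x + (y + 1 - y) = t - (x - 1) by lia.
case: (k =P m) => [_|km].
  case: ifP => _ /=.
    have := dvd_modsub n (y - 1); move: (_ %% _)%Z => t.
    by have -> : x + 1 - x + (t - y) = t - (y - 1) by lia.
  have := dvd_modsub n (y + 1); move: (_ %% _)%Z => t.
  by have -> : x - 1 - x + (t - y) = t - (y + 1) by lia.
by have -> : y - x + (x - y) = 0 by lia.
Qed.

Lemma sgen_vtx n m k v : (0 < n)%N -> (1 <= m)%N -> yoke_vertex n m v -> yoke_vertex n m (s_gen n m k v).
Proof.
move=> hn hm hv; have hs := vtx_size hv.
have E : forall p, (p < m.+2)%N -> p != k -> p != k.+1 -> ent (s_gen n m k v) p = ent v p.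
  by move=> p hp h1 h2; rewrite ent_sgen // (negbTE h1) (negbTE h2).
have hk1 : (k.+1 < m.+2)%N by rewrite ltnS.
have hk : (k < m.+2)%N by apply: ltnW.
have [V1 V2] := pf_valid hn hm (leq_ord k)
   (vtx_ent hv hk : valid n m k (ent v k)) (vtx_ent hv hk1 : valid n m k.+1 (ent v k.+1)).
apply/and3P; split.
- by rewrite size_sgen.
- apply/forallP => -[p hp] /=.
  case: (p =P k) => [pk|pk]; last case: (p =P k.+1) => [pk1|pk1].
  + by rewrite ent_sgen // pk eqxx.
  + by rewrite ent_sgen // pk1 eqxx gtn_eqF.
  + by rewrite E //; [exact: vtx_ent|apply/eqP..].
- case/and3P: hv => _ _ hsum.
  rewrite (sum2 (F := ent (s_gen n m k v)) (G := ent v) hk1); last first.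
    by move=> j hj h1 h2; apply: E.
  rewrite -addrA rpredD // ent_sgen // eqxx ent_sgen // eqxx gtn_eqF //.
  exact: pf_dvd.
Qed.

Lemma ent_sk n m (k : 'I_m.+1) w : (1 <= m)%N -> ent (s_gen n m k w) k = (pf n m k (ent w k) (ent w k.+1)).1.
Proof. by move=> hm; rewrite ent_sgen ?eqxx // ltnS ltnW. Qed.

Lemma ent_sk1 n m (k : 'I_m.+1) w : (1 <= m)%N -> ent (s_gen n m k w) k.+1 = (pf n m k (ent w k) (ent w k.+1)).2.
Proof. by move=> hm; rewrite ent_sgen ?eqxx ?gtn_eqF // ltnS. Qed.

Lemma e01 : (0 == 1 :> int) = false. Proof. by []. Qed.
Lemma e10 : (1 == 0 :> int) = false. Proof. by []. Qed.
Ltac simp := repeat (rewrite ?eqxx ?subrr ?add0r ?e01 ?e10 /=).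

Lemma pf_inv n m k x y : (0 < n)%N -> (1 <= m)%N -> (k <= m)%N ->
  valid n m k x -> valid n m k.+1 y ->
  pf n m k (pf n m k x y).1 (pf n m k x y).2 = (x, y).
Proof.
move=> hn hm hk; rewrite /valid /pf.
case: (k =P 0%N) => [->|k0].
  rewrite (nb (m:=m) (p:=1)) //= => hx hy.
  have : y = 0 \/ y = 1 by lia.
  case=> ->; simp; rewrite modzDml.
    by rewrite (_ : x - 1 + 1 = x) ?modz_small //; lia.
  by rewrite (_ : x + 1 - 1 = x) ?modz_small //; lia.
case: (k =P m) => [->|km].
  rewrite nb // /is_bucket eqxx orbT /= => hx hy.
  have : x = 0 \/ x = 1 by lia.
  case=> ->; simp; rewrite modzDml.
    by rewrite (_ : y - 1 + 1 = y) ?modz_small //; lia.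
  by rewrite (_ : y + 1 - 1 = y) ?modz_small //; lia.
by [].
Qed.

Lemma sgen_inv n m k v : (0 < n)%N -> (1 <= m)%N -> yoke_vertex n m v ->
  s_gen n m k (s_gen n m k v) = v.
Proof.
move=> hn hm hv; have hs := vtx_size hv.
have hk1 : (k.+1 < m.+2)%N by rewrite ltnS.
have hk : (k < m.+2)%N by apply: ltnW.
apply: (eq_from_ent (m:=m)); rewrite ?size_sgen //.
move=> p hp; rewrite ent_sgen // ent_sk // ent_sk1 // pf_inv //;
  try exact: leq_ord; try exact: (vtx_ent hv hk); try exact: (vtx_ent hv hk1).
case: eqP => [->|h1] //; case: eqP => [->|h2] //.
by rewrite ent_sgen // (introF eqP h1) (introF eqP h2).
Qed.

Lemma sgen_comm n m (k l : 'I_m.+1) w : (1 <= m)%N -> (k.+1 < l)%N ->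
  s_gen n m k (s_gen n m l w) = s_gen n m l (s_gen n m k w).
Proof.
move=> hm hkl.
have hk1 : (k.+1 < m.+2)%N by rewrite ltnS.
have hk : (k < m.+2)%N by apply: ltnW.
have hl1 : (l.+1 < m.+2)%N by rewrite ltnS.
have hl : (l < m.+2)%N by apply: ltnW.
apply: (eq_from_ent (m:=m)); rewrite ?size_sgen //.
move=> p hp; rewrite !ent_sgen //.
have n1 : (k == l :> nat) = false by apply/eqP; lia.
have n2 : (k == l.+1 :> nat) = false by apply/eqP; lia.
have n3 : (k.+1 == l :> nat) = false by apply/eqP; lia.
have n4 : (k.+1 == l.+1 :> nat) = false by apply/eqP; lia.
have n5 : (l == k :> nat) = false by apply/eqP; lia.
have n6 : (l == k.+1 :> nat) = false by apply/eqP; lia.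
have n7 : (l.+1 == k :> nat) = false by apply/eqP; lia.
have n8 : (l.+1 == k.+1 :> nat) = false by apply/eqP; lia.
rewrite n1 n2 n3 n4 n5 n6 n7 n8.
case: (p =P k) => [->|h1]; first by rewrite n1 n2.
case: (p =P k.+1) => [->|h2]; first by rewrite n3 n4.
by [].
Qed.

Definition sw (k p : nat) : nat := if p == k then k.+1 else if p == k.+1 then k else p.
Lemma sw_kk k : sw k k = k.+1. Proof. by rewrite /sw eqxx. Qed.
Lemma sw_kk1 k : sw k k.+1 = k. Proof. by rewrite /sw eqxx gtn_eqF. Qed.
Lemma sw_k2 k : sw k k.+2 = k.+2. Proof. by rewrite /sw !gtn_eqF // ltnW. Qed.
Lemma sw_Sk k : sw k.+1 k = k. Proof. by rewrite /sw !ltn_eqF // ltnW. Qed.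
Lemma sw_o k p : p != k -> p != k.+1 -> sw k p = p.
Proof. by move=> h1 h2; rewrite /sw (negbTE h1) (negbTE h2). Qed.
Lemma sw_lt k p N : (k.+1 < N)%N -> (p < N)%N -> (sw k p < N)%N.
Proof. by rewrite /sw; case: eqP => // _; case: eqP => // _ h _; apply: ltnW. Qed.

Lemma ent_mid n m (k : 'I_m.+1) w p : (0 < k)%N -> (k < m)%N -> (p < m.+2)%N ->
  ent (s_gen n m k w) p = ent w (sw k p).
Proof.
move=> h0 hm hp; rewrite ent_sgen //; last by apply: leq_trans hm.
rewrite pfmid; [|by rewrite -lt0n|by rewrite ltn_eqF].
by rewrite /sw; case: eqP => //; case: eqP.
Qed.

Lemma braid_ok n m (i j : 'I_m.+1) w : (1 <= i)%N -> (i <= m - 2)%N -> (j : nat) = i.+1 ->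
  size w = m.+2 ->
  s_gen n m i (s_gen n m j (s_gen n m i (s_gen n m j (s_gen n m i (s_gen n m j w))))) = w.
Proof.
move=> h1 h2 hj hs.
have hi0 : (0 < i)%N by [].
have him : (i < m)%N by lia.
have hj0 : (0 < j)%N by lia.
have hjm : (j < m)%N by lia.
have hiN : (i.+1 < m.+2)%N by lia.
have hjN : (j.+1 < m.+2)%N by lia.
apply: (eq_from_ent (m:=m)); rewrite ?size_sgen //.
move=> p hp.
rewrite !ent_mid //; try by repeat apply: sw_lt.
rewrite hj.
case: (p =P i) => [->|n1]; first by rewrite !(sw_kk, sw_kk1, sw_k2, sw_Sk).
case: (p =P i.+1) => [->|n2]; first by rewrite !(sw_kk, sw_kk1, sw_k2, sw_Sk).
case: (p =P i.+2) => [->|n3]; first by rewrite !(sw_kk, sw_kk1, sw_k2, sw_Sk).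
have e1 : sw i p = p by apply: sw_o; apply/eqP.
have e2 : sw i.+1 p = p by apply: sw_o; apply/eqP.
by rewrite !(e1, e2).
Qed.

Definition L3 m (v w : seq int) (a : int) (b c : bool) : Prop :=
  [/\ size w = m.+2, ent w 0 = a, ent w 1 = Posz b, ent w 2 = Posz c &
      forall p, (2 < p < m.+2)%N -> ent w p = ent v p].

Lemma stepL1 n m (j : 'I_m.+1) v w a b c : (2 <= m)%N -> nat_of_ord j = 1%N ->
  L3 m v w a b c -> L3 m v (s_gen n m j w) a c b.
Proof.
move=> hm hj [hs h0 h1 h2 hr].
have j0 : (0 < j)%N by rewrite hj.
have jm : (j < m)%N by rewrite hj.
split; first by rewrite size_sgen.
- rewrite ent_mid //; try lia. by rewrite hj sw_Sk.
- rewrite ent_mid //; try lia. by rewrite hj sw_kk.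
- rewrite ent_mid //; try lia. by rewrite hj sw_kk1.
- move=> p hp; rewrite ent_mid; try lia.
  rewrite hj sw_o; try (apply/eqP; lia). by apply: hr.
Qed.

Lemma stepL0 n m (i : 'I_m.+1) v w a b c : (2 <= m)%N -> nat_of_ord i = 0%N ->
  L3 m v w a b c -> L3 m v (s_gen n m i w) (if b then ((a + 1) %% n%:Z)%Z else ((a - 1) %% n%:Z)%Z) (~~ b) c.
Proof.
move=> hm hi [hs h0 h1 h2 hr].
have hm1 : (1 <= m)%N by apply: ltnW.
split; first by rewrite size_sgen.
- rewrite ent_sgen // hi /pf h0 h1 eqxx; case: b h1 => h1; simp; reflexivity.
- rewrite ent_sgen // hi /pf h0 h1 eqxx; case: b h1 => h1; simp; reflexivity.
- have h2m : (2 < m.+2)%N by lia.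
  rewrite ent_sgen // hi /=. exact: h2.
- move=> p hp; have hpm : (p < m.+2)%N by lia.
  have hp0 : (p == 0)%N = false by lia.
  have hp1 : (p == 1)%N = false by lia.
  rewrite ent_sgen // hi hp0 hp1 /=. apply: hr. exact: hp.
Qed.

Lemma mzD2 (n x a b : int) : ((((x %% n)%Z + a) + b) %% n)%Z = ((x + a + b) %% n)%Z.
Proof. by rewrite -addrA modzDml addrA. Qed.

Lemma mzD3 (n x a b c : int) : ((((x %% n)%Z + a) + b + c) %% n)%Z = ((x + a + b + c) %% n)%Z.
Proof. by have := mzD2 n x a (b + c); rewrite !addrA. Qed.

Lemma modz_fix (n : nat) (a x : int) : 0 <= a < n%:Z -> x = a -> (x %% n%:Z)%Z = a.
Proof. by move=> h ->; rewrite modz_small. Qed.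

Lemma bitE (x : int) : x = 0 \/ x = 1 -> exists b : bool, x = Posz b.
Proof. by case=> ->; [exists false|exists true]. Qed.

Lemma left_ok n m (i j : 'I_m.+1) v : (0 < n)%N -> (2 <= m)%N -> nat_of_ord i = 0%N -> nat_of_ord j = 1%N ->
  yoke_vertex n m v ->
  s_gen n m i (s_gen n m j (s_gen n m i (s_gen n m j (s_gen n m i (s_gen n m j (s_gen n m i (s_gen n m j v))))))) = v.
Proof.
move=> hn hm hi hj hv.
have hm1 : (1 <= m)%N by apply: ltnW.
have [b hb] := bitE (vtx_bit hv (isT : (0 < 1)%N) hm1).
have [c hc] := bitE (vtx_bit hv (isT : (0 < 2)%N) hm).
have H0 : L3 m v v (ent v 0) b c by split => //; exact: (vtx_size hv).
have := stepL0 n hm hi (stepL1 n hm hj (stepL0 n hm hi (stepL1 n hm hj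
        (stepL0 n hm hi (stepL1 n hm hj (stepL0 n hm hi (stepL1 n hm hj H0))))))).
case=> hs e0 e1 e2 er.
have ha := vtx_b0 hv.
apply: (eq_from_ent (m:=m)); first exact: hs.
  exact: vtx_size hv.
move=> p hp.
case: (p =P 0%N) => [->|p0].
  rewrite e0; move: (ent v 0) ha => a ha.
  case: (b); case: (c); simp; rewrite ?(mzD3, mzD2, modzDml); (apply: modz_fix; [exact: ha | lia]).
case: (p =P 1%N) => [->|p1]; first by rewrite e1 hb !negbK.
case: (p =P 2%N) => [->|p2]; first by rewrite e2 hc !negbK.
apply: er; lia.
Qed.

Definition R3 k (v w : seq int) (b c : bool) (a : int) : Prop :=
  [/\ size w = k.+4, ent w k.+1 = Posz b, ent w k.+2 = Posz c, ent w k.+3 = a &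
      forall p, (p < k.+1)%N -> ent w p = ent v p].

Lemma nSn k : (k == k.+1) = false. Proof. exact: ltn_eqF. Qed.
Lemma nSSn k : (k == k.+2) = false. Proof. by apply: ltn_eqF; apply: leqW. Qed.
Lemma nSnn k : (k.+1 == k) = false. Proof. exact: gtn_eqF. Qed.
Lemma nSSnn k : (k.+2 == k) = false. Proof. by apply: gtn_eqF; apply: leqW. Qed.

Lemma stepR1 n k (i : 'I_k.+3) v w b c a : nat_of_ord i = k.+1 ->
  R3 k v w b c a -> R3 k v (s_gen n k.+2 i w) c b a.
Proof.
move=> hi [hs h0 h1 h2 hr].
have i0 : (0 < i)%N by rewrite hi.
have im : (i < k.+2)%N by rewrite hi.
have q1 : (k.+1 < k.+4)%N by lia.
have q2 : (k.+2 < k.+4)%N by lia.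
have q3 : (k.+3 < k.+4)%N by lia.
split; first by rewrite size_sgen.
- rewrite ent_mid //. by rewrite hi sw_kk.
- rewrite ent_mid //. by rewrite hi sw_kk1.
- rewrite ent_mid //. by rewrite hi sw_k2.
- move=> p hp; rewrite ent_mid; try lia.
  rewrite hi sw_o; try (apply/eqP; lia). by apply: hr.
Qed.

Lemma stepR0 n k (j : 'I_k.+3) v w b c a : nat_of_ord j = k.+2 ->
  R3 k v w b c a -> R3 k v (s_gen n k.+2 j w) b (~~ c) (if c then ((a + 1) %% n%:Z)%Z else ((a - 1) %% n%:Z)%Z).
Proof.
move=> hj [hs h0 h1 h2 hr].
have q1 : (k.+1 < k.+4)%N by lia.
have q2 : (k.+2 < k.+4)%N by lia.
have q3 : (k.+3 < k.+4)%N by lia.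
split; first by rewrite size_sgen.
- have hp : (k.+1 < k.+4)%N by [].
  rewrite ent_sgen // hj nSn nSSn. exact: h0.
- rewrite ent_sgen // hj eqxx /pf /= eqxx h1 h2; case: c h1 => h1; simp; reflexivity.
- rewrite ent_sgen // hj eqxx nSnn /pf /= eqxx h1 h2; case: c h1 => h1; simp; reflexivity.
- move=> p hp; have hpm : (p < k.+4)%N by lia.
  have hp0 : (p == k.+2)%N = false by lia.
  have hp1 : (p == k.+3)%N = false by lia.
  rewrite ent_sgen // hj hp0 hp1 /=. apply: hr. exact: hp.
Qed.

Lemma right_ok n k (i j : 'I_k.+3) v : (0 < n)%N -> nat_of_ord i = k.+1 -> nat_of_ord j = k.+2 ->
  yoke_vertex n k.+2 v ->
  s_gen n k.+2 i (s_gen n k.+2 j (s_gen n k.+2 i (s_gen n k.+2 j (s_gen n k.+2 i (s_gen n k.+2 j (s_gen n k.+2 i (s_gen n k.+2 j v))))))) = v.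
Proof.
move=> hn hi hj hv.
have [b hb] := bitE (vtx_bit hv (isT : (0 < k.+1)%N) (leqW (leqnn k.+1))).
have [c hc] := bitE (vtx_bit hv (isT : (0 < k.+2)%N) (leqnn k.+2)).
have H0 : R3 k v v b c (ent v k.+3) by split => //; exact: (vtx_size hv).
have := stepR1 n hi (stepR0 n hj (stepR1 n hi (stepR0 n hj
        (stepR1 n hi (stepR0 n hj (stepR1 n hi (stepR0 n hj H0))))))).
case=> hs e1 e2 e3 er.
have ha := vtx_bm hv.
apply: (eq_from_ent (m:=k.+2)); first exact: hs.
  exact: vtx_size hv.
move=> p hp.
case: (p =P k.+3) => [->|p0].
  rewrite e3; move: (ent v k.+3) ha => a ha.
  case: (b); case: (c); simp; rewrite ?(mzD3, mzD2, modzDml); (apply: modz_fix; [exact: ha | lia]).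
case: (p =P k.+1) => [->|p1]; first by rewrite e1 hb !negbK.
case: (p =P k.+2) => [->|p2]; first by rewrite e2 hc !negbK.
apply: er; lia.
Qed.

Lemma F1 (n : nat) (x x' : int) : (0 < n)%N -> 0 <= x' < n%:Z -> (n%:Z %| x - (x' + 1))%Z -> x' = ((x - 1) %% n%:Z)%Z.
Proof.
move=> hn hx' h; apply: modz_canon => //.
by rewrite (_ : x' - (x - 1) = - (x - (x' + 1))) ?rpredN //; lia.
Qed.

Lemma F2 (n : nat) (x x' : int) : (0 < n)%N -> 0 <= x' < n%:Z -> (n%:Z %| x - (x' - 1))%Z -> x' = ((x + 1) %% n%:Z)%Z.
Proof.
move=> hn hx' h; apply: modz_canon => //.
by rewrite (_ : x' - (x + 1) = - (x - (x' - 1))) ?rpredN //; lia.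
Qed.

Lemma F3 (n : nat) (x : int) : (n%:Z %| x - (((x + 1) %% n%:Z)%Z - 1))%Z.
Proof.
have := dvd_modsub n (x + 1); move: ((x + 1) %% n%:Z)%Z => t h.
by rewrite (_ : x - (t - 1) = - (t - (x + 1))) ?rpredN //; lia.
Qed.

Lemma F4 (n : nat) (x : int) : (n%:Z %| x - (((x - 1) %% n%:Z)%Z + 1))%Z.
Proof.
have := dvd_modsub n (x - 1); move: ((x - 1) %% n%:Z)%Z => t h.
by rewrite (_ : x - (t + 1) = - (t - (x - 1))) ?rpredN //; lia.
Qed.

Definition acond n m i (x y x' y' : int) : Prop :=
  (eq_ent n m i x (x' + 1) /\ eq_ent n m i.+1 y (y' - 1)) \/
  (eq_ent n m i x (x' - 1) /\ eq_ent n m i.+1 y (y' + 1)).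

Lemma bm m : is_bucket m m.+1 = true.
Proof. by rewrite /is_bucket eqxx orbT. Qed.

Lemma adj_fwd n m i x y x' y' : (0 < n)%N -> (1 <= m)%N -> (i <= m)%N ->
  valid n m i x -> valid n m i.+1 y -> valid n m i x' -> valid n m i.+1 y' ->
  acond n m i x y x' y' -> pf n m i x y = (x', y') /\ (x != x' \/ y != y').
Proof.
move=> hn hm hi; rewrite /valid /acond /eq_ent /pf.
case: (i =P 0%N) => [->|i0].
  rewrite (nb (m:=m) (p:=1)) //= => hx hy hx' hy'.
  case=> -[h1 /eqP h2].
    have [-> ->] : y = 0 /\ y' = 1 by lia.
    simp; split; [congr (_, _); symmetry; exact: F1 | by right].
  have [-> ->] : y = 1 /\ y' = 0 by lia.
  simp; split; [congr (_, _); symmetry; exact: F2 | by right].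
case: (i =P m) => [->|im].
  rewrite nb // bm /= => hx hy hx' hy'.
  case=> -[/eqP h1 h2].
    have [-> ->] : x = 1 /\ x' = 0 by lia.
    simp; split; [congr (_, _); symmetry; exact: F2 | by left].
  have [-> ->] : x = 0 /\ x' = 1 by lia.
  simp; split; [congr (_, _); symmetry; exact: F1 | by left].
rewrite !nb; try lia.
move=> hx hy hx' hy'.
case=> -[/eqP h1 /eqP h2].
  have [-> [-> [-> ->]]] : x = 1 /\ x' = 0 /\ y = 0 /\ y' = 1 by lia.
  by split; [|left].
have [-> [-> [-> ->]]] : x = 0 /\ x' = 1 /\ y = 1 /\ y' = 0 by lia.
by split; [|left].
Qed.

Lemma adj_bwd n m i x y x' y' : (0 < n)%N -> (1 <= m)%N -> (i <= m)%N ->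
  valid n m i x -> valid n m i.+1 y ->
  pf n m i x y = (x', y') -> (x != x' \/ y != y') -> acond n m i x y x' y'.
Proof.
move=> hn hm hi; rewrite /valid /acond /eq_ent /pf.
case: (i =P 0%N) => [->|i0].
  rewrite (nb (m:=m) (p:=1)) //= => hx hy.
  have : y = 0 \/ y = 1 by lia.
  case=> -> ; simp; case=> <- <- _.
    by left; split; [exact: F4|].
  by right; split; [exact: F3|].
case: (i =P m) => [->|im].
  rewrite nb // bm /= => hx hy.
  have : x = 0 \/ x = 1 by lia.
  case=> -> ; simp; case=> <- <- _.
    by right; split; [|exact: F4].
  by left; split; [|exact: F3].
rewrite !nb; try lia.
move=> hx hy [<- <-] hne.
have : (x = 1 /\ y = 0) \/ (x = 0 /\ y = 1).
  by case: hne => /eqP; lia.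
by case=> -[-> ->]; [left|right].
Qed.

Lemma eq_ent_vtx n m u v p : (0 < n)%N -> yoke_vertex n m u -> yoke_vertex n m v -> (p < m.+2)%N ->
  eq_ent n m p (ent u p) (ent v p) -> ent u p = ent v p.
Proof.
move=> hn hu hv hp; have := vtx_ent hu hp; have := vtx_ent hv hp.
rewrite /eq_ent; case: ifP => _; last by move=> _ _ /eqP.
move=> hv' hu' h; rewrite (modz_canon hn hu' h) modz_small //.
Qed.

Lemma eq_ent_refl n m p a : eq_ent n m p a a.
Proof. by rewrite /eq_ent; case: ifP => _; rewrite ?subrr ?dvdz0. Qed.

Lemma adj_iff n m u v : (0 < n)%N -> (1 <= m)%N -> yoke_vertex n m u -> yoke_vertex n m v ->
  (yoke_adj n m u v <-> (u != v /\ exists i : 'I_m.+1, v = s_gen n m i u)).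
Proof.
move=> hn hm hu hv; have hsu := vtx_size hu; have hsv := vtx_size hv.
split.
- case=> i [hi [hr hc]].
  have hi1 : (i.+1 < m.+2)%N by rewrite ltnS.
  have hi0 : (i < m.+2)%N by apply: ltnW.
  have [hpf hne] := adj_fwd hn hm hi (vtx_ent hu hi0) (vtx_ent hu hi1)
    (vtx_ent hv hi0) (vtx_ent hv hi1) hc.
  split.
    apply/eqP => E; subst v; by case: hne; rewrite eqxx.
  exists (Ordinal (hi : (i < m.+1)%N)).
  apply: (eq_from_ent (m:=m)) => // [|p hp]; first by rewrite size_sgen.
  rewrite ent_sgen //= hpf /=.
  case: (p =P i) => [->|h1] //; case: (p =P i.+1) => [->|h2] //.
  apply: esym; apply: (eq_ent_vtx hn hu hv hp); apply: hr => //.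
- case=> hne [I hvI].
  have hi : (I <= m)%N by exact: leq_ord.
  have hi1 : (I.+1 < m.+2)%N by rewrite ltnS.
  have hi0 : (I < m.+2)%N by apply: ltnW.
  have hrest : forall j, (j < m.+2)%N -> j <> I -> j <> I.+1 -> ent v j = ent u j.
    move=> j hj h1 h2; rewrite hvI ent_sgen //.
    by rewrite (introF eqP h1) (introF eqP h2).
  exists I; split => //; split.
    by move=> j hj h1 h2; rewrite (hrest j hj h1 h2) eq_ent_refl.
  apply: (adj_bwd hn hm hi (vtx_ent hu hi0) (vtx_ent hu hi1)).
    by rewrite hvI ent_sk // ent_sk1 // -surjective_pairing.
  case: (eqVneq (ent u I) (ent v I)) => [h1|h1]; last by left.
  case: (eqVneq (ent u I.+1) (ent v I.+1)) => [h2|h2]; last by right.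
  exfalso; move/negP: hne; apply; apply/eqP.
  apply: (eq_from_ent (m:=m)) => // p hp.
  case: (p =P I) => [->|p1] //; case: (p =P I.+1) => [->|p2] //.
  by rewrite hrest.
Qed.

Lemma act_vtx n m w v : (0 < n)%N -> (1 <= m)%N -> yoke_vertex n m v -> yoke_vertex n m (act n m w v).
Proof. move=> hn hm hv; elim: w => //= k w IH; exact: sgen_vtx. Qed.

Lemma act_cat n m p q v : act n m (p ++ q) v = act n m p (act n m q v).
Proof. by rewrite /act foldr_cat. Qed.

Lemma rel_ok n k (a b : seq 'I_k.+3) v : (0 < n)%N -> cox_rel a b -> yoke_vertex n k.+2 v ->
  act n k.+2 a v = act n k.+2 b v.
Proof.
move=> hn hr hv; have hm : (1 <= k.+2)%N by [].
case: hr => /=.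
- by move=> i; rewrite sgen_inv.
- move=> i j hij.
  have hy := sgen_vtx j hn hm hv.
  have E : s_gen n k.+2 j (s_gen n k.+2 i (s_gen n k.+2 j v)) =
           s_gen n k.+2 i (s_gen n k.+2 j (s_gen n k.+2 j v)).
    by case: hij => h; [symmetry; apply: sgen_comm|apply: sgen_comm].
  rewrite E sgen_inv //; last exact: sgen_vtx.
  by rewrite sgen_inv.
- move=> i j h1 h2 h3; apply: braid_ok => //; exact: vtx_size hv.
- move=> i j h1 h2; exact: left_ok.
- move=> i j h1 h2; exact: right_ok.
Qed.

Lemma eq_ok n k (w1 w2 : seq 'I_k.+3) : (0 < n)%N -> cox_eq w1 w2 ->
  forall v, yoke_vertex n k.+2 v -> act n k.+2 w1 v = act n k.+2 w2 v.
Proof.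
move=> hn; elim=> //.
- by move=> ? ? _ IH v hv; rewrite IH.
- by move=> ? ? ? _ IH1 _ IH2 v hv; rewrite IH1 // IH2.
- move=> p q a b hr v hv; rewrite !act_cat; congr (act _ _ p _).
  apply: rel_ok => //; exact: act_vtx.
Qed.

Theorem corollary3p17 (n m : nat) : (1 <= n)%N -> (2 <= m)%N ->
  ((forall (i : 'I_m.+1) v, yoke_vertex n m v -> yoke_vertex n m (s_gen n m i v)) /\
   (forall w1 w2 : seq 'I_m.+1, cox_eq w1 w2 ->
      forall v, yoke_vertex n m v -> act n m w1 v = act n m w2 v)) /\
  (forall u v, yoke_vertex n m u -> yoke_vertex n m v ->
     (yoke_adj n m u v <-> (u != v /\ exists i : 'I_m.+1, v = s_gen n m i u))).
Proof.
move=> hn hm; have hm1 : (1 <= m)%N by apply: ltnW.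
split; [split|].
- by move=> i v hv; apply: sgen_vtx.
- case: m hm {hm1} => [|[|k]] // hm.
  move=> w1 w2 h; exact: eq_ok.
- by move=> u v hu hv; apply: adj_iff.
Qed.
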